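(* Let $F(z)=\bar{z}G(z)+H(z)$, $z\in\mathbb{D}$, where $G(z)=\sum_{n=1}^\infty a_nz^n\not\equiv 0$ and $H(z)=z+\sum_{n=2}^\infty b_nz^n$ are analytic in $\mathbb{D}$, and suppose that for some $r\in(0,1)$, $$\sum_{n=2}^\infty n|b_n|r^{n-1}+\sum_{n=1}^\infty(n+1)|a_n|r^n\leq 1.$$ Then $F$ is sense-preserving, univalent and fully starlike in $\mathbb{D}_r$.
   Context: $\mathbb{D}=\{z:|z|<1\}$, $\mathbb{D}_r=\{z:|z|<r\}$. For a continuously differentiable $F$, $F_z=\frac12(F_x-iF_y)$, $F_{\bar z}=\frac12(F_x+iF_y)$, and the Jacobian is $J_F=|F_z|^2-|F_{\bar z}|^2$; $F$ is sense-preserving on a domain if $J_F>0$ there. $F$ is fully starlike in $\mathbb{D}_r$ if it is sense-preserving there, $F(0)=0$, $F(z)\neq 0$ for $z\in\mathbb{D}_r\setminus\{0\}$, and for each $s\in(0,r)$ the curve $t\mapsto F(se^{it})$ is starlike with respect to the origin, i.e. $\mathrm{Re}\big((zF_z(z)-\bar zF_{\bar z}(z))/F(z)\big)>0$ for all $|z|=s$. *)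

(* Defs.v *)
From Stdlib Require Import Reals.
From Coquelicot Require Import Coquelicot.
Open Scope R_scope.

Definition pdx (f : C -> C) (z : C) : C :=
  (Derive (fun t => Re (f (Cplus z (RtoC t)))) 0,
   Derive (fun t => Im (f (Cplus z (RtoC t)))) 0).
Definition pdy (f : C -> C) (z : C) : C :=
  (Derive (fun t => Re (f (Cplus z (Cmult (RtoC t) Ci)))) 0,
   Derive (fun t => Im (f (Cplus z (Cmult (RtoC t) Ci)))) 0).

Definition Fz (f : C -> C) (z : C) : C :=
  Cmult (RtoC (/2)) (Cminus (pdx f z) (Cmult Ci (pdy f z))).
Definition Fzb (f : C -> C) (z : C) : C :=
  Cmult (RtoC (/2)) (Cplus (pdx f z) (Cmult Ci (pdy f z))).

Definition Jac (f : C -> C) (z : C) : R := (Cmod (Fz f z))^2 - (Cmod (Fzb f z))^2.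

Definition sense_preserving_in (f : C -> C) (r : R) : Prop :=
  forall z : C, Cmod z < r -> 0 < Jac f z.

Definition univalent_in (f : C -> C) (r : R) : Prop :=
  forall z w : C, Cmod z < r -> Cmod w < r -> f z = f w -> z = w.

Definition fully_starlike_in (f : C -> C) (r : R) : Prop :=
  sense_preserving_in f r /\ f (RtoC 0) = RtoC 0 /\
  (forall z : C, 0 < Cmod z < r -> f z <> RtoC 0) /\
  (forall s : R, 0 < s < r -> forall z : C, Cmod z = s ->
     0 < Re (Cdiv (Cminus (Cmult z (Fz f z)) (Cmult (Cconj z) (Fzb f z))) (f z))).

(* Main.v *)
Require Import Defs.
From Stdlib Require Import Reals.
From Coquelicot Require Import Coquelicot.
From Stdlib Require Import Lra Lia Psatz.
Open Scope R_scope.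


Lemma powC (z : C) n : pow_n (K:=C_AbsRing) z n = Cpow z n.
Proof. induction n; simpl; [reflexivity|]. rewrite <- IHn. reflexivity. Qed.

Lemma Cmod_opp' (x : C) : Cmod (Copp x) = Cmod x.
Proof. unfold Cmod; destruct x; simpl. f_equal. ring. Qed.

Lemma sum_n_Cmod (u : nat -> C) (v : nat -> R) :
  (forall n, Cmod (u n) <= v n) ->
  forall N, Cmod (sum_n (G:=C_NormedModule) u N) <= sum_n (G:=R_NormedModule) v N.
Proof.
  intros Huv N; induction N.
  - rewrite !sum_O. apply Huv.
  - rewrite !sum_Sn. eapply Rle_trans. apply Cmod_triangle.
    specialize (Huv (S N)). apply Rplus_le_compat; assumption.
Qed.

Lemma sum_n_le_R (u v : nat -> R) :
  (forall n, u n <= v n) -> forall N, sum_n u N <= sum_n v N.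
Proof.
  intros Huv N; induction N.
  - rewrite !sum_O. apply Huv.
  - rewrite !sum_Sn. change (plus (sum_n u N) (u (S N)) <= plus (sum_n v N) (v (S N))).
    unfold plus; simpl. specialize (Huv (S N)). lra.
Qed.

Lemma series_le_R (u v : nat -> R) (su sv : R) :
  is_series u su -> is_series v sv -> (forall n, u n <= v n) -> su <= sv.
Proof.
  intros Hu Hv Huv.
  assert (H := is_lim_seq_le (sum_n u) (sum_n v) su sv (sum_n_le_R u v Huv) Hu Hv).
  exact H.
Qed.

Lemma series_Cmod_le_is (u : nat -> C) (v : nat -> R) (l : C) (S : R) :
  is_series (V:=C_NormedModule) u l -> is_series v S ->
  (forall n, Cmod (u n) <= v n) -> Cmod l <= S.
Proof.
  intros Hu Hv Huv.
  apply le_epsilon. intros eps Heps.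
  set (e := mkposreal (eps / (1 + sqrt 2)) ltac:(apply Rdiv_lt_0_compat; [lra| pose proof (sqrt_pos 2); lra])).
  unfold is_series in Hu, Hv.
  pose proof (proj1 (filterlim_locally (sum_n u) l) Hu e) as Hu'.
  pose proof (proj1 (filterlim_locally (sum_n v) S) Hv e) as Hv'. clear Hu Hv.
  rename Hu' into Hu. rename Hv' into Hv.
  destruct (filter_and _ _ Hu Hv) as [N HN].
  destruct (HN N (Nat.le_refl N)) as [H1 H2].
  apply (norm_compat2 (V:=C_NormedModule)) in H1.
  change (Cmod (Cminus (sum_n u N) l) < norm_factor (V:=C_NormedModule) * e) in H1.
  assert (Hs := sum_n_Cmod u v Huv N).
  assert (Hnf : norm_factor (V:=C_NormedModule) = sqrt 2) by reflexivity.
  rewrite Hnf in H1.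
  pose (x := (sum_n (G:=C_NormedModule) u N : C)).
  pose (y := (sum_n (G:=R_NormedModule) v N : R)).
  assert (H1' : Cmod (Cminus x l) < sqrt 2 * e) by exact H1.
  assert (H2' : Rabs (y - S) < e) by exact H2.
  assert (Hs' : Cmod x <= y) by exact Hs.
  clearbody x y. clear H1 H2 Hs HN Hu Hv.
  assert (Htri : Cmod l <= Cmod x + Cmod (Cminus x l)).
  { replace l with (Cplus x (Copp (Cminus x l))) at 1.
    eapply Rle_trans. apply Cmod_triangle. rewrite Cmod_opp'. lra.
    destruct l, x; unfold Cplus, Copp, Cminus; simpl; f_equal; ring. }
  assert (He : (1 + sqrt 2) * e = eps).
  { simpl. field. pose proof (sqrt_pos 2); lra. }
  assert (He' : sqrt 2 * e + e = eps) by (rewrite <- He; ring).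
  apply Rabs_lt_between in H2'. destruct H2' as [H2a H2b].
  clearbody e. lra.
Qed.

Lemma series_Cmod_le (u : nat -> C) (v : nat -> R) (l : C) :
  is_series (V:=C_NormedModule) u l -> ex_series v ->
  (forall n, Cmod (u n) <= v n) -> Cmod l <= Series v.
Proof. intros Hu Hv Huv. eapply series_Cmod_le_is; eauto. apply Series_correct; auto. Qed.


Lemma lim_inv_n1 : is_lim_seq (fun n => / (INR n + 1)) 0.
Proof.
  assert (H : is_lim_seq (fun n => INR n + 1) p_infty).
  { apply is_lim_seq_ext with (fun n => INR (S n)). intro n; apply S_INR.
    apply (is_lim_seq_incr_1 INR p_infty). apply is_lim_seq_INR. }
  apply is_lim_seq_inv in H. exact H. discriminate.
Qed.

Lemma geom2 (q : R) : 0 < q < 1 -> ex_series (fun n => (INR n + 1)^2 * q^n).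
Proof.
  intros Hq.
  assert (Hpos : forall n, 0 < (INR n + 1)^2 * q^n).
  { intro n. apply Rmult_lt_0_compat. pose proof (pos_INR n). nra. apply pow_lt; lra. }
  apply ex_series_ext with (fun n => Rabs ((INR n + 1)^2 * q^n)).
  { intro n. apply Rabs_pos_eq. apply Rlt_le, Hpos. }
  apply ex_series_DAlembert with q. lra.
  { intro n. apply Rgt_not_eq, Hpos. }
  apply is_lim_seq_ext with (fun n => ((1 + / (INR n + 1)) * (1 + / (INR n + 1))) * q).
  { intro n. rewrite Rabs_pos_eq.
    rewrite S_INR. simpl. field. split. apply Rgt_not_eq, pow_lt; lra.
    pose proof (pos_INR n). lra.
    apply Rlt_le. unfold Rdiv. apply Rmult_lt_0_compat. apply Hpos. apply Rinv_0_lt_compat, Hpos. }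
  assert (H : is_lim_seq (fun n => ((1 + / (INR n + 1)) * (1 + / (INR n + 1))) * q) ((1 + 0) * (1 + 0) * q)).
  { apply is_lim_seq_mult'; [|apply is_lim_seq_const].
    apply is_lim_seq_mult'; apply is_lim_seq_plus'; try apply is_lim_seq_const; apply lim_inv_n1. }
  replace ((1 + 0) * (1 + 0) * q) with q in H by ring. exact H.
Qed.


Definition PS (c : nat -> C) (z : C) (l : C) :=
  is_series (V:=C_NormedModule) (fun n => Cmult (Cpow z n) (c n)) l.

Lemma PS_of_pseries c z l :
  is_pseries (c : nat -> C_NormedModule) (z : C_AbsRing) l -> PS c z l.
Proof.
  intro H. unfold PS. eapply is_series_ext; [|exact H].
  intro n. simpl. rewrite powC. reflexivity.
Qed.

Lemma Cmod_R (x : R) : Cmod (RtoC x) = Rabs x.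
Proof. unfold Cmod, RtoC; simpl. rewrite <- sqrt_Rsqr_abs. f_equal. unfold Rsqr; ring. Qed.

Lemma coef_bound (c : nat -> C) (x : R) (l : C) : 0 < x -> PS c (RtoC x) l ->
  exists N, forall n, (N <= n)%nat -> Cmod (c n) * x ^ n < 1.
Proof.
  intros Hx H.
  assert (Hex : ex_series (V:=C_NormedModule) (fun n => Cmult (Cpow (RtoC x) n) (c n))) by (exists l; exact H).
  apply (Cauchy_ex_series (K:=C_AbsRing) (V:=C_CompleteNormedModule)) in Hex.
  destruct (Hex (mkposreal 1 Rlt_0_1)) as [N HN].
  exists N. intros n Hn. specialize (HN n n Hn Hn). rewrite sum_n_n in HN.
  change (Cmod (Cmult (Cpow (RtoC x) n) (c n)) < 1) in HN.
  rewrite Cmod_mult, Cmod_pow, Cmod_R, Rabs_pos_eq in HN by lra. lra.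
Qed.

Lemma S2 (c : nat -> C) :
  (forall z, Cmod z < 1 -> exists l, PS c z l) ->
  forall rho, 0 <= rho < 1 -> ex_series (fun n => (INR n + 1)^2 * Cmod (c n) * rho^n).
Proof.
  intros Hc rho Hrho.
  set (r3 := (1 + rho) / 2). set (r1 := (1 + r3) / 2).
  assert (Hr1 : Cmod (RtoC r1) < 1). { rewrite Cmod_R, Rabs_pos_eq; unfold r1, r3; lra. }
  destruct (Hc _ Hr1) as [l Hl].
  destruct (coef_bound c r1 l) as [N HN]; [unfold r1, r3; lra | exact Hl |].
  set (q := r3 / r1).
  assert (Hq : 0 < q < 1). { unfold q, r1, r3. split. apply Rdiv_lt_0_compat; lra.
    apply Rmult_lt_reg_r with ((1 + (1 + rho) / 2) / 2). lra. unfold Rdiv at 1.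
    rewrite Rmult_assoc, Rinv_l by lra. lra. }
  apply (ex_series_incr_n (K:=R_AbsRing) (V:=R_NormedModule) _ N).
  apply (ex_series_le (K:=R_AbsRing) (V:=R_CompleteNormedModule)) with (fun k => (INR (N + k) + 1)^2 * q^(N + k)).
  - intro k. change (Rabs ((INR (N + k) + 1)^2 * Cmod (c (N + k)%nat) * rho^(N + k)) <= (INR (N + k) + 1)^2 * q^(N + k)).
    assert (H0 : 0 <= Cmod (c (N + k)%nat)) by apply Cmod_ge_0.
    assert (Hp : 0 <= rho ^ (N + k)) by (apply pow_le; lra).
    assert (Hi : 0 <= (INR (N + k) + 1)^2) by (apply pow2_ge_0).
    rewrite Rabs_pos_eq by (apply Rmult_le_pos; [apply Rmult_le_pos|]; auto).
    rewrite Rmult_assoc. apply Rmult_le_compat_l; auto.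
    specialize (HN (N + k)%nat ltac:(lia)).
    assert (Hrr : rho ^ (N + k) <= r3 ^ (N + k)) by (apply pow_incr; unfold r3; lra).
    assert (Hq' : r3 ^ (N + k) = q ^ (N + k) * r1 ^ (N + k)).
    { unfold q. rewrite <- Rpow_mult_distr. f_equal. field. unfold r1, r3; lra. }
    assert (Hq0 : 0 <= q ^ (N + k)) by (apply pow_le; lra).
    eapply Rle_trans. apply Rmult_le_compat_l. exact H0. exact Hrr.
    rewrite Hq'. nra.
  - apply (ex_series_incr_n (K:=R_AbsRing) (V:=R_NormedModule) (fun n => (INR n + 1)^2 * q^n) N).
    apply geom2; auto.
Qed.


Lemma Cmod_INR n : Cmod (RtoC (INR n)) = INR n.
Proof. rewrite Cmod_R. apply Rabs_pos_eq, pos_INR. Qed.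

Lemma pow_pred_mul (x : R) n : INR n * (x * x ^ (pred n)) = INR n * x ^ n.
Proof. destruct n. simpl; ring. simpl. ring. Qed.

Lemma diff_pow_bound (z w : C) (rho : R) : Cmod z <= rho -> Cmod w <= rho ->
  forall n, Cmod (Cminus (Cpow z n) (Cpow w n)) <= INR n * rho ^ (pred n) * Cmod (Cminus z w).
Proof.
  intros Hz Hw n. induction n.
  - simpl. replace (Cminus 1 1) with (RtoC 0) by (unfold Cminus, Cplus, Copp, RtoC; simpl; f_equal; ring).
    rewrite Cmod_0. lra.
  - replace (Cminus (Cpow z (S n)) (Cpow w (S n))) with
      (Cplus (Cmult z (Cminus (Cpow z n) (Cpow w n))) (Cmult (Cminus z w) (Cpow w n)))
      by (simpl; ring).
    eapply Rle_trans. apply Cmod_triangle. rewrite !Cmod_mult, Cmod_pow.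
    assert (H0 : 0 <= Cmod z) by apply Cmod_ge_0.
    assert (H1 : 0 <= Cmod w) by apply Cmod_ge_0.
    assert (H2 : 0 <= Cmod (Cminus z w)) by apply Cmod_ge_0.
    assert (H3 : 0 <= Cmod (Cminus (Cpow z n) (Cpow w n))) by apply Cmod_ge_0.
    assert (Hp : Cmod w ^ n <= rho ^ n) by (apply pow_incr; auto).
    assert (Hpp := pow_pred_mul rho n).
    assert (Hr : 0 <= rho) by lra.
    assert (Hq : 0 <= INR n * rho ^ pred n) by (apply Rmult_le_pos; [apply pos_INR|apply pow_le; lra]).
    rewrite S_INR. simpl pred.
    assert (A1 : Cmod z * Cmod (Cminus (Cpow z n) (Cpow w n)) <= rho * (INR n * rho ^ pred n * Cmod (Cminus z w))).
    { apply Rmult_le_compat; auto. }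
    assert (A2 : Cmod (Cminus z w) * Cmod w ^ n <= Cmod (Cminus z w) * rho ^ n).
    { apply Rmult_le_compat_l; auto. }
    assert (E : rho * (INR n * rho ^ pred n * Cmod (Cminus z w)) = INR n * rho ^ n * Cmod (Cminus z w)).
    { rewrite <- Hpp. ring. }
    nra.
Qed.

Lemma e_bound (z h : C) (rho : R) : Cmod z + Cmod h <= rho ->
  forall n, Cmod (Cminus (Cminus (Cpow (Cplus z h) n) (Cpow z n)) (Cmult (Cmult (RtoC (INR n)) h) (Cpow z (pred n)))) * rho ^ 2
    <= INR n ^ 2 * Cmod h ^ 2 * rho ^ n.
Proof.
  intros Hr n.
  assert (H0 : 0 <= Cmod z) by apply Cmod_ge_0.
  assert (H1 : 0 <= Cmod h) by apply Cmod_ge_0.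
  induction n.
  - simpl. replace (Cminus (Cminus 1 1) (Cmult (Cmult (RtoC 0) h) 1)) with (RtoC 0)
      by (unfold Cminus, Cplus, Copp, Cmult, RtoC; simpl; f_equal; ring).
    rewrite Cmod_0. lra.
  - destruct n as [|m].
    + simpl. replace (Cminus (Cminus (Cmult (Cplus z h) 1) (Cmult z 1)) (Cmult (Cmult (RtoC 1) h) 1)) with (RtoC 0).
      rewrite Cmod_0. nra.
      destruct z, h; unfold Cminus, Cplus, Copp, Cmult, RtoC; simpl; f_equal; ring.
    + set (n := S m) in *.
      set (W := Cpow (Cplus z h) n). set (P := Cpow z m).
      assert (EP : Cpow z n = Cmult z P) by reflexivity.
      assert (EW : Cpow (Cplus z h) (S n) = Cmult (Cplus z h) W) by reflexivity.
      assert (Epred : pred (S n) = n) by reflexivity.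
      assert (Epred2 : pred n = m) by reflexivity.
      change (pred n) with m in IHn. fold W in IHn. fold P in IHn.
      set (E := Cminus (Cminus W (Cpow z n)) (Cmult (Cmult (RtoC (INR n)) h) P)) in IHn.
      assert (EP2 : Cpow z (S n) = Cmult z (Cmult z P)) by reflexivity.
      rewrite EW, Epred, EP2.
      replace (Cminus (Cminus (Cmult (Cplus z h) W) (Cmult z (Cmult z P))) (Cmult (Cmult (RtoC (INR (S n))) h) (Cpow z n)))
        with (Cplus (Cmult (Cplus z h) E) (Cmult (Cmult (RtoC (INR n)) (Cmult h h)) P)).
      2:{ unfold E. rewrite EP. rewrite S_INR, RtoC_plus. ring. }
      assert (HE : 0 <= Cmod E) by apply Cmod_ge_0.
      assert (Hzh : Cmod (Cplus z h) <= rho) by (eapply Rle_trans; [apply Cmod_triangle|exact Hr]).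
      assert (HP : Cmod P <= rho ^ m) by (unfold P; rewrite Cmod_pow; apply pow_incr; lra).
      assert (Hrho : 0 <= rho) by lra.
      assert (Hin : 0 <= INR n) by apply pos_INR.
      assert (Hrn : rho ^ S n = rho * rho ^ n) by reflexivity.
      assert (Hrn2 : rho ^ n * rho = rho ^ m * rho ^ 2) by (unfold n; simpl; ring).
      assert (B1 : Cmod (Cmult (Cplus z h) E) * rho ^ 2 <= rho * (INR n ^ 2 * Cmod h ^ 2 * rho ^ n)).
      { rewrite Cmod_mult. rewrite Rmult_assoc. apply Rmult_le_compat; auto. apply Cmod_ge_0.
        apply Rmult_le_pos; auto. apply pow_le; auto. }
      assert (B2 : Cmod (Cmult (Cmult (RtoC (INR n)) (Cmult h h)) P) * rho ^ 2 <= INR n * Cmod h ^ 2 * rho ^ S n).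
      { rewrite !Cmod_mult, Cmod_INR. rewrite Hrn.
        replace (rho * rho ^ n) with (rho ^ m * rho ^ 2) by (rewrite <- Hrn2; ring).
        assert (0 <= rho ^ 2) by (apply pow_le; auto).
        assert (0 <= Cmod P) by apply Cmod_ge_0.
        replace (INR n * Cmod h ^ 2 * (rho ^ m * rho ^ 2)) with ((INR n * (Cmod h * Cmod h)) * rho ^ m * rho ^ 2) by ring.
        apply Rmult_le_compat_r; auto.
        apply Rmult_le_compat_l; auto. apply Rmult_le_pos; auto. apply Rmult_le_pos; auto. }
      assert (Hcz := Cmod_triangle (Cmult (Cplus z h) E) (Cmult (Cmult (RtoC (INR n)) (Cmult h h)) P)).
      assert (0 <= rho ^ 2) by (apply pow_le; auto).
      assert (Hh2 : 0 <= Cmod h ^ 2) by (apply pow_le; auto).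
      assert (Hrn0 : 0 <= rho ^ n) by (apply pow_le; auto).
      rewrite S_INR.
      assert (X : INR n ^ 2 * Cmod h ^ 2 * rho ^ S n + INR n * Cmod h ^ 2 * rho ^ S n <= (INR n + 1) ^ 2 * Cmod h ^ 2 * rho ^ S n).
      { assert (0 <= Cmod h ^ 2 * rho ^ S n) by (apply Rmult_le_pos; auto; apply pow_le; auto).
        nra. }
      rewrite Hrn in X |- *. nra.
Qed.


Definition dterm (c : nat -> C) (z : C) (n : nat) : C :=
  Cmult (Cmult (RtoC (INR n)) (c n)) (Cpow z (pred n)).

Lemma pow_pred_le (x : R) n : 1/2 <= x -> x ^ pred n <= 2 * x ^ n.
Proof.
  intro Hx. destruct n. simpl. lra. simpl pred. simpl.
  assert (0 <= x ^ n) by (apply pow_le; lra). nra.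
Qed.

Lemma INR_le_sq n : INR n <= (INR n + 1) ^ 2.
Proof. pose proof (pos_INR n). nra. Qed.

Lemma dterm_bound (c : nat -> C) (z : C) (rho : R) n :
  Cmod z <= rho -> 1/2 <= rho ->
  Cmod (dterm c z n) <= 2 * ((INR n + 1)^2 * Cmod (c n) * rho ^ n).
Proof.
  intros Hz Hr. unfold dterm. rewrite !Cmod_mult, Cmod_INR, Cmod_pow.
  assert (H1 : Cmod z ^ pred n <= rho ^ pred n) by (apply pow_incr; split; [apply Cmod_ge_0|auto]).
  assert (H2 := pow_pred_le rho n Hr).
  assert (H3 := INR_le_sq n).
  assert (H4 : 0 <= Cmod (c n)) by apply Cmod_ge_0.
  assert (H5 : 0 <= INR n) by apply pos_INR.
  assert (H6 : 0 <= Cmod z ^ pred n) by (apply pow_le, Cmod_ge_0).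
  assert (H7 : 0 <= rho ^ n) by (apply pow_le; lra).
  assert (H8 : INR n * Cmod (c n) <= (INR n + 1) ^ 2 * Cmod (c n)) by (apply Rmult_le_compat_r; auto).
  assert (H9 : Cmod z ^ pred n <= 2 * rho ^ n) by lra.
  assert (H10 : 0 <= INR n * Cmod (c n)) by (apply Rmult_le_pos; auto).
  apply Rle_trans with ((INR n + 1) ^ 2 * Cmod (c n) * (2 * rho ^ n)).
  apply Rmult_le_compat; auto. nra.
Qed.

Lemma pseries_quad (c : nat -> C) (g : C -> C) :
  (forall z, Cmod z < 1 -> PS c z (g z)) ->
  forall z, Cmod z < 1 -> exists d,
    is_series (V:=C_NormedModule) (dterm c z) d /\
    exists K delta, 0 < delta /\ forall h, Cmod h < delta ->
      Cmod (Cminus (Cminus (g (Cplus z h)) (g z)) (Cmult h d)) <= K * Cmod h ^ 2.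
Proof.
  intros Hg z Hz.
  assert (Hc : forall z, Cmod z < 1 -> exists l, PS c z l) by (intros w Hw; exists (g w); auto).
  set (r2 := (Cmod z + 1) / 2).
  assert (Hz0 : 0 <= Cmod z) by apply Cmod_ge_0.
  assert (Hr2 : 0 <= r2 < 1) by (unfold r2; lra).
  set (s2 := fun n => (INR n + 1)^2 * Cmod (c n) * r2 ^ n).
  assert (Hs2 : ex_series s2) by (apply S2; auto).
  assert (Hd : ex_series (V:=C_NormedModule) (dterm c z)).
  { apply (ex_series_le (K:=C_AbsRing) (V:=C_CompleteNormedModule)) with (fun n => 2 * s2 n).
    intro n. change (Cmod (dterm c z n) <= 2 * s2 n). apply dterm_bound; unfold r2; lra.
    apply (ex_series_scal_l (K:=R_AbsRing) (V:=R_NormedModule) 2 s2). exact Hs2. }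
  destruct Hd as [d Hd]. exists d. split; auto.
  exists (Series s2 / r2 ^ 2), (r2 - Cmod z). split. unfold r2; lra.
  intros h Hh.
  assert (Hzh : Cmod (Cplus z h) < 1).
  { eapply Rle_lt_trans. apply Cmod_triangle. unfold r2 in Hh. lra. }
  assert (H1 := Hg _ Hzh). assert (H0 := Hg _ Hz).
  assert (Hs := is_series_minus _ _ _ _ (is_series_minus _ _ _ _ H1 H0) (is_series_scal_l (K:=C_AbsRing) (V:=C_NormedModule) h _ _ Hd)).
  assert (Hbound : Cmod (Cminus (Cminus (g (Cplus z h)) (g z)) (Cmult h d)) <= Series (fun n => (Cmod h ^ 2 / r2 ^ 2) * s2 n)).
  { eapply series_Cmod_le. exact Hs.
    apply (ex_series_scal_l (K:=R_AbsRing) (V:=R_NormedModule)). exact Hs2.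
    intro n. cbv beta.
    set (e := Cminus (Cminus (Cpow (Cplus z h) n) (Cpow z n)) (Cmult (Cmult (RtoC (INR n)) h) (Cpow z (pred n)))).
    assert (Ee : plus (plus (Cmult (Cpow (Cplus z h) n) (c n)) (opp (Cmult (Cpow z n) (c n)))) (opp (scal h (dterm c z n)))
       = Cmult (c n) e :> C).
    { unfold e, dterm. change (Cplus (Cplus (Cmult (Cpow (Cplus z h) n) (c n)) (Copp (Cmult (Cpow z n) (c n)))) (Copp (Cmult h (Cmult (Cmult (RtoC (INR n)) (c n)) (Cpow z (pred n))))) =
        Cmult (c n) (Cminus (Cminus (Cpow (Cplus z h) n) (Cpow z n)) (Cmult (Cmult (RtoC (INR n)) h) (Cpow z (pred n))))). ring. }
    match goal with |- Cmod ?X <= _ => replace X with (Cmult (c n) e) by (rewrite <- Ee; reflexivity) end.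
    rewrite Cmod_mult.
    assert (Hb := e_bound z h r2 ltac:(unfold r2 in *; lra) n). fold e in Hb.
    assert (Hr2p : 0 < r2 ^ 2) by (apply pow_lt; unfold r2; lra).
    unfold s2.
    assert (Hcn : 0 <= Cmod (c n)) by apply Cmod_ge_0.
    apply Rmult_le_reg_r with (r2 ^ 2). auto.
        replace (Cmod h ^ 2 / r2 ^ 2 * ((INR n + 1) ^ 2 * Cmod (c n) * r2 ^ n) * r2 ^ 2)
      with (Cmod (c n) * ((INR n + 1) ^ 2 * Cmod h ^ 2 * r2 ^ n)) by (field; apply Rgt_not_eq; unfold r2; lra).
    rewrite Rmult_assoc. apply Rmult_le_compat_l; auto.
    eapply Rle_trans. exact Hb. apply Rmult_le_compat_r. apply pow_le; lra.
    apply Rmult_le_compat_r. apply pow2_ge_0. pose proof (pos_INR n). nra. }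
  rewrite Series_scal_l in Hbound.
  replace (Series s2 / r2 ^ 2 * Cmod h ^ 2) with (Cmod h ^ 2 / r2 ^ 2 * Series s2) by (field; unfold r2; lra).
  exact Hbound.
Qed.


Lemma deriv_quad (phi : R -> R) (L K delta : R) : 0 < delta ->
  (forall t, Rabs t < delta -> Rabs (phi t - phi 0 - t * L) <= K * t ^ 2) ->
  Derive phi 0 = L.
Proof.
  intros Hd H. apply is_derive_unique. apply is_derive_Reals.
  intros eps Heps.
  assert (HK : 0 < Rabs K + 1) by (pose proof (Rabs_pos K); lra).
  assert (He : 0 < Rmin delta (eps / (Rabs K + 1))) by (apply Rmin_pos; [lra| apply Rdiv_lt_0_compat; lra]).
  exists (mkposreal _ He). intros h Hh0 Hh. simpl in Hh.
  assert (Hh1 : Rabs h < delta) by (eapply Rlt_le_trans; [exact Hh| apply Rmin_l]).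
  assert (Hh2 : Rabs h < eps / (Rabs K + 1)) by (eapply Rlt_le_trans; [exact Hh| apply Rmin_r]).
  specialize (H h Hh1).
  rewrite Rplus_0_l.
  replace ((phi h - phi 0) / h - L) with ((phi h - phi 0 - h * L) / h) by (field; auto).
  unfold Rdiv. rewrite Rabs_mult, Rabs_inv.
  assert (Hp : 0 < Rabs h) by (apply Rabs_pos_lt; auto).
  apply Rmult_lt_reg_r with (Rabs h). auto.
  rewrite Rmult_assoc, Rinv_l by lra. rewrite Rmult_1_r.
  assert (Ht2 : h ^ 2 = Rabs h * Rabs h) by (rewrite <- Rabs_mult; simpl; rewrite Rmult_1_r; symmetry; apply Rabs_pos_eq; nra).
  rewrite Ht2 in H.
  assert (K * (Rabs h * Rabs h) <= Rabs K * (Rabs h * Rabs h)) by (apply Rmult_le_compat_r; [nra|apply RRle_abs]).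
  assert (Hm : Rabs h * (Rabs K + 1) < eps).
  { apply Rmult_lt_reg_r with (/ (Rabs K + 1)). apply Rinv_0_lt_compat; lra.
    rewrite Rmult_assoc, Rinv_r by lra. rewrite Rmult_1_r. exact Hh2. }
  nra.
Qed.

Lemma Cmod_RtoC_t (t : R) : Cmod (RtoC t) ^ 2 = t ^ 2.
Proof. rewrite Cmod_R. rewrite <- Rsqr_pow2, <- Rsqr_pow2. symmetry. apply Rsqr_abs. Qed.

Lemma Cmod_tCi (t : R) : Cmod (Cmult (RtoC t) Ci) ^ 2 = t ^ 2.
Proof. rewrite Cmod2_alt. simpl. ring. Qed.

Lemma Cmod_tCi_lt (t : R) : Cmod (Cmult (RtoC t) Ci) = Rabs t.
Proof. rewrite Cmod_mult, Cmod_R. replace (Cmod Ci) with 1. ring.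
  unfold Cmod, Ci; simpl. replace (0 * (0 * 1) + 1 * (1 * 1)) with 1 by ring. symmetry; apply sqrt_1. Qed.

Lemma im_le_Cmod (c : C) : Rabs (Im c) <= Cmod c.
Proof.
  rewrite <- (Rabs_pos_eq (Cmod c)) by apply Cmod_ge_0.
  apply Rsqr_le_abs_0. rewrite !Rsqr_pow2, Cmod2_alt.
  pose proof (pow2_ge_0 (Re c)). lra.
Qed.

Lemma Wirt (f : C -> C) (z P Q : C) (K delta : R) : 0 < delta ->
  (forall h, Cmod h < delta ->
     Cmod (Cminus (Cminus (f (Cplus z h)) (f z)) (Cplus (Cmult h P) (Cmult (Cconj h) Q))) <= K * Cmod h ^ 2) ->
  Fz f z = P /\ Fzb f z = Q.
Proof.
  intros Hd H.
  assert (Ez : forall w, Cplus z w = Cplus z w) by reflexivity.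
  assert (Dx1 : Derive (fun t => Re (f (Cplus z (RtoC t)))) 0 = Re (Cplus P Q)).
  { apply deriv_quad with K delta; auto. intros t Ht.
    assert (Hz0 : Cplus z (RtoC 0) = z) by (destruct z; unfold Cplus, RtoC; simpl; f_equal; ring).
    rewrite Hz0. rewrite <- Cmod_R in Ht.
    specialize (H (RtoC t) Ht). rewrite Cmod_RtoC_t in H.
    eapply Rle_trans; [|exact H]. eapply Rle_trans; [|apply re_le_Cmod]. right. f_equal.
    destruct (f (Cplus z (RtoC t))), (f z), P, Q; simpl; ring. }
  assert (Dx2 : Derive (fun t => Im (f (Cplus z (RtoC t)))) 0 = Im (Cplus P Q)).
  { apply deriv_quad with K delta; auto. intros t Ht.
    assert (Hz0 : Cplus z (RtoC 0) = z) by (destruct z; unfold Cplus, RtoC; simpl; f_equal; ring).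
    rewrite Hz0. rewrite <- Cmod_R in Ht.
    specialize (H (RtoC t) Ht). rewrite Cmod_RtoC_t in H.
    eapply Rle_trans; [|exact H]. eapply Rle_trans; [|apply im_le_Cmod]. right. f_equal.
    destruct (f (Cplus z (RtoC t))), (f z), P, Q; simpl; ring. }
  assert (Dy1 : Derive (fun t => Re (f (Cplus z (Cmult (RtoC t) Ci)))) 0 = Re (Cminus (Cmult Ci P) (Cmult Ci Q))).
  { apply deriv_quad with K delta; auto. intros t Ht.
    assert (Hz0 : Cplus z (Cmult (RtoC 0) Ci) = z) by (destruct z; unfold Cplus, Cmult, RtoC, Ci; simpl; f_equal; ring).
    rewrite Hz0. rewrite <- Cmod_tCi_lt in Ht.
    specialize (H _ Ht). rewrite Cmod_tCi in H.
    eapply Rle_trans; [|exact H]. eapply Rle_trans; [|apply re_le_Cmod]. right. f_equal.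
    destruct (f (Cplus z (Cmult (RtoC t) Ci))), (f z), P, Q; simpl; ring. }
  assert (Dy2 : Derive (fun t => Im (f (Cplus z (Cmult (RtoC t) Ci)))) 0 = Im (Cminus (Cmult Ci P) (Cmult Ci Q))).
  { apply deriv_quad with K delta; auto. intros t Ht.
    assert (Hz0 : Cplus z (Cmult (RtoC 0) Ci) = z) by (destruct z; unfold Cplus, Cmult, RtoC, Ci; simpl; f_equal; ring).
    rewrite Hz0. rewrite <- Cmod_tCi_lt in Ht.
    specialize (H _ Ht). rewrite Cmod_tCi in H.
    eapply Rle_trans; [|exact H]. eapply Rle_trans; [|apply im_le_Cmod]. right. f_equal.
    destruct (f (Cplus z (Cmult (RtoC t) Ci))), (f z), P, Q; simpl; ring. }
  unfold Fz, Fzb, pdx, pdy. rewrite Dx1, Dx2, Dy1, Dy2.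
  destruct P as [p1 p2], Q as [q1 q2]. simpl.
  split; unfold Cmult, Cminus, Cplus, Copp, RtoC, Ci; simpl; f_equal; field.
Qed.


Lemma isC_plus (u v : nat -> C) (a b : C) :
  is_series (V:=C_NormedModule) u a -> is_series (V:=C_NormedModule) v b ->
  is_series (V:=C_NormedModule) (fun n => Cplus (u n) (v n)) (Cplus a b).
Proof. intros Hu Hv. exact (is_series_plus _ _ _ _ Hu Hv). Qed.

Lemma isC_minus (u v : nat -> C) (a b : C) :
  is_series (V:=C_NormedModule) u a -> is_series (V:=C_NormedModule) v b ->
  is_series (V:=C_NormedModule) (fun n => Cminus (u n) (v n)) (Cminus a b).
Proof. intros Hu Hv. exact (is_series_minus _ _ _ _ Hu Hv). Qed.

Lemma isC_scal (c : C) (u : nat -> C) (a : C) :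
  is_series (V:=C_NormedModule) u a ->
  is_series (V:=C_NormedModule) (fun n => Cmult c (u n)) (Cmult c a).
Proof. intros Hu. exact (is_series_scal_l (K:=C_AbsRing) c _ _ Hu). Qed.

Lemma isC_ext (u v : nat -> C) (a b : C) :
  (forall n, u n = v n) -> a = b ->
  is_series (V:=C_NormedModule) u a -> is_series (V:=C_NormedModule) v b.
Proof. intros Huv <- Hu. exact (is_series_ext _ _ _ Huv Hu). Qed.

Lemma Cplus_0' (x : C) : x = Cplus x (RtoC 0).
Proof. destruct x; unfold Cplus, RtoC; simpl; f_equal; ring. Qed.

Lemma is_series_finite (u : nat -> C) N :
  (forall n, (N < n)%nat -> u n = RtoC 0) -> is_series (V:=C_NormedModule) u (sum_n (G:=C_NormedModule) u N).
Proof.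
  intros Hu. unfold is_series.
  apply filterlim_ext_loc with (fun _ => sum_n (G:=C_NormedModule) u N).
  - exists N. intros n Hn. induction Hn. reflexivity.
    rewrite sum_Sn, Hu by lia. rewrite <- IHHn.
    apply Cplus_0'.
  - apply filterlim_const.
Qed.

Lemma Series_zero (u : nat -> R) : Series (fun _ => 0) = 0.
Proof.
  rewrite (Series_ext (fun _ => 0) (fun n => 0 * 0)) by (intro; ring).
  rewrite Series_scal_l. ring.
Qed.

Lemma series_ge_term (u : nat -> R) m : ex_series u -> (forall n, 0 <= u n) -> u m <= Series u.
Proof.
  intros Hex Hp. rewrite (Series_incr_n u (S m)) by (lia || auto).
  simpl pred.
  assert (H1 : 0 <= Series (fun k => u (S m + k)%nat)).
  { rewrite <- (Series_zero u). apply Series_le. intro n; split; [lra|apply Hp].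
    apply (ex_series_incr_n (K:=R_AbsRing) (V:=R_NormedModule) u (S m)). exact Hex. }
  assert (H2 : u m <= sum_f_R0 u m).
  { destruct m. simpl; lra. simpl. assert (0 <= sum_f_R0 u m) by (apply cond_pos_sum; auto). lra. }
  lra.
Qed.


Lemma Cmod_conj' (x : C) : Cmod (Cconj x) = Cmod x.
Proof. apply Cmod_conj. Qed.

Lemma F_derivs (a b : nat -> C) (G H0 F : C -> C) :
  (forall z, Cmod z < 1 -> PS a z (G z)) ->
  (forall z, Cmod z < 1 -> PS b z (H0 z)) ->
  (forall w, F w = Cplus (Cmult (Cconj w) (G w)) (Cplus w (H0 w))) ->
  forall z, Cmod z < 1 -> exists dG dH,
    is_series (V:=C_NormedModule) (dterm a z) dG /\
    is_series (V:=C_NormedModule) (dterm b z) dH /\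
    Fz F z = Cplus (Cmult (Cconj z) dG) (Cplus (RtoC 1) dH) /\ Fzb F z = G z.
Proof.
  intros Ga Hb HF z Hz.
  destruct (pseries_quad a G Ga z Hz) as [dG [HdG [K1 [d1 [Hd1 HK1]]]]].
  destruct (pseries_quad b H0 Hb z Hz) as [dH [HdH [K2 [d2 [Hd2 HK2]]]]].
  exists dG, dH. split; [auto|]. split; [auto|].
  apply (Wirt F z _ _ (Cmod z * Rabs K1 + Cmod dG + Rabs K1 + Rabs K2) (Rmin d1 (Rmin d2 1))).
  { apply Rmin_pos; auto. apply Rmin_pos; lra. }
  intros h Hh.
  assert (Hh1 : Cmod h < d1) by (eapply Rlt_le_trans; [exact Hh|apply Rmin_l]).
  assert (Hh2 : Cmod h < d2) by (eapply Rlt_le_trans; [exact Hh|]; eapply Rle_trans; [apply Rmin_r|apply Rmin_l]).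
  assert (Hh3 : Cmod h < 1) by (eapply Rlt_le_trans; [exact Hh|]; eapply Rle_trans; [apply Rmin_r|apply Rmin_r]).
  specialize (HK1 h Hh1). specialize (HK2 h Hh2).
  set (EG := Cminus (Cminus (G (Cplus z h)) (G z)) (Cmult h dG)) in *.
  set (EH := Cminus (Cminus (H0 (Cplus z h)) (H0 z)) (Cmult h dH)) in *.
  replace (Cminus (Cminus (F (Cplus z h)) (F z))
      (Cplus (Cmult h (Cplus (Cmult (Cconj z) dG) (Cplus (RtoC 1) dH))) (Cmult (Cconj h) (G z))))
    with (Cplus (Cplus (Cmult (Cconj z) EG) (Cmult (Cconj h) (Cplus EG (Cmult h dG)))) EH).
  2:{ rewrite !HF. rewrite Cplus_conj. unfold EG, EH. ring. }
  assert (x0 : 0 <= Cmod h) by apply Cmod_ge_0.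
  assert (eg0 : 0 <= Cmod EG) by apply Cmod_ge_0.
  assert (z0 : 0 <= Cmod z) by apply Cmod_ge_0.
  assert (dg0 : 0 <= Cmod dG) by apply Cmod_ge_0.
  assert (T1 := Cmod_triangle (Cplus (Cmult (Cconj z) EG) (Cmult (Cconj h) (Cplus EG (Cmult h dG)))) EH).
  assert (T2 := Cmod_triangle (Cmult (Cconj z) EG) (Cmult (Cconj h) (Cplus EG (Cmult h dG)))).
  assert (T3 := Cmod_triangle EG (Cmult h dG)).
  rewrite !Cmod_mult, !Cmod_conj' in *.
  assert (A1 : K1 * Cmod h ^ 2 <= Rabs K1 * Cmod h ^ 2) by (apply Rmult_le_compat_r; [apply pow2_ge_0|apply RRle_abs]).
  assert (A2 : K2 * Cmod h ^ 2 <= Rabs K2 * Cmod h ^ 2) by (apply Rmult_le_compat_r; [apply pow2_ge_0|apply RRle_abs]).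
  assert (B1 : Cmod z * Cmod EG <= Cmod z * (Rabs K1 * Cmod h ^ 2)) by (apply Rmult_le_compat_l; lra).
  assert (B2 : Cmod h * Cmod EG <= Rabs K1 * Cmod h ^ 2).
  { apply Rle_trans with (Cmod h * (Rabs K1 * Cmod h ^ 2)). apply Rmult_le_compat_l; lra.
    assert (0 <= Rabs K1 * Cmod h ^ 2) by (apply Rmult_le_pos; [apply Rabs_pos|apply pow2_ge_0]). nra. }
  assert (B3 : Cmod h * (Cmod h * Cmod dG) = Cmod dG * Cmod h ^ 2) by ring.
  assert (B4 : Cmod h * Cmod (Cplus EG (Cmult h dG)) <= Cmod h * (Cmod EG + Cmod h * Cmod dG)) by (apply Rmult_le_compat_l; lra).
  assert (B5 : Cmod z * (Rabs K1 * Cmod h ^ 2) = Cmod z * Rabs K1 * Cmod h ^ 2) by ring.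
  nra.
Qed.


Lemma pow_lt_S (x y : R) k : 0 <= x < y -> x ^ S k < y ^ S k.
Proof.
  intros Hxy. simpl.
  assert (H1 : x ^ k <= y ^ k) by (apply pow_incr; lra).
  assert (H2 : 0 < y ^ k) by (apply pow_lt; lra).
  assert (H3 : 0 <= x ^ k) by (apply pow_le; lra).
  nra.
Qed.

Lemma is_series_R0 : is_series (fun _ : nat => 0) 0.
Proof.
  unfold is_series. apply filterlim_ext with (fun _ => 0).
  - intro n. induction n. rewrite sum_O. reflexivity. rewrite sum_Sn, <- IHn.
    change (0 = 0 + 0). ring.
  - apply filterlim_const.
Qed.

Lemma Cmod_le_0_eq (x : C) : Cmod x <= 0 -> x = RtoC 0.
Proof. intro H. apply Cmod_eq_0. pose proof (Cmod_ge_0 x). lra. Qed.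

Lemma Cminus_eq0 (x y : C) : Cminus x y = RtoC 0 -> x = y.
Proof.
  destruct x as [x1 x2], y as [y1 y2]. unfold Cminus, Cplus, Copp, RtoC; simpl.
  intro H. injection H. intros. f_equal; lra.
Qed.

Lemma isC_unique (u : nat -> C) (a b : C) :
  is_series (V:=C_NormedModule) u a -> is_series (V:=C_NormedModule) u b -> a = b.
Proof.
  intros Ha Hb. apply Cminus_eq0. apply Cmod_le_0_eq.
  apply (series_Cmod_le_is (fun n => Cminus (u n) (u n)) (fun _ => 0)).
  apply isC_minus; auto. apply is_series_R0.
  intro n. replace (Cminus (u n) (u n)) with (RtoC 0). rewrite Cmod_0; lra.
  destruct (u n); unfold Cminus, Cplus, Copp, RtoC; simpl; f_equal; ring.
Qed.

Lemma Cmod_rev (x y : C) : Cmod x - Cmod y <= Cmod (Cplus x y).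
Proof.
  assert (H := Cmod_triangle (Cplus x y) (Copp y)).
  replace (Cplus (Cplus x y) (Copp y)) with x in H. rewrite Cmod_opp' in H. lra.
  destruct x, y; unfold Cplus, Copp; simpl; f_equal; ring.
Qed.

Lemma Cmod_dterm (c : nat -> C) z n :
  Cmod (dterm c z n) = INR n * Cmod (c n) * Cmod z ^ pred n.
Proof. unfold dterm. rewrite !Cmod_mult, Cmod_INR, Cmod_pow. ring. Qed.

Lemma z_dterm (c : nat -> C) z n :
  Cmult z (dterm c z n) = Cmult (Cmult (RtoC (INR n)) (c n)) (Cpow z n).
Proof. unfold dterm. destruct n. simpl. ring. simpl pred. simpl Cpow. ring. Qed.

Lemma Cmod_Cpow_mul (z c : C) n : Cmod (Cmult (Cpow z n) c) = Cmod c * Cmod z ^ n.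
Proof. rewrite Cmod_mult, Cmod_pow. ring. Qed.

Lemma Re_div_pos (A B : C) : Cmod (Cminus A B) < Cmod B -> 0 < Re (Cdiv A B).
Proof.
  intro H.
  assert (H2 : Cmod (Cminus A B) ^ 2 < Cmod B ^ 2).
  { assert (0 <= Cmod (Cminus A B)) by apply Cmod_ge_0. nra. }
  rewrite !Cmod2_alt in H2.
  destruct A as [a1 a2], B as [b1 b2]. simpl in *.
  unfold Cdiv, Cmult, Cinv; simpl.
  assert (Hb : 0 < b1 * b1 + b2 * b2) by (pose proof (Rle_0_sqr (a1 + - b1)); pose proof (Rle_0_sqr (a2 + - b2)); unfold Rsqr in *; nra).
  match goal with |- 0 < ?e => replace e with ((a1 * b1 + a2 * b2) / (b1 ^ 2 + b2 ^ 2)) end.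
  2:{ field. lra. }
  apply Rdiv_lt_0_compat; nra.
Qed.


Definition tt (a b : nat -> C) (rho : R) (n : nat) : R :=
  INR n * Cmod (b n) * rho ^ (pred n) + (INR n + 1) * Cmod (a n) * rho ^ n.

Lemma tt_nonneg a b rho n : 0 <= rho -> 0 <= tt a b rho n.
Proof.
  intro H. unfold tt. pose proof (pos_INR n). pose proof (Cmod_ge_0 (a n)). pose proof (Cmod_ge_0 (b n)).
  assert (0 <= rho ^ pred n) by (apply pow_le; auto). assert (0 <= rho ^ n) by (apply pow_le; auto).
  apply Rplus_le_le_0_compat; repeat apply Rmult_le_pos; lra.
Qed.

Lemma tt_mono a b rho rho' n : 0 <= rho <= rho' -> tt a b rho n <= tt a b rho' n.
Proof.
  intro H. unfold tt. pose proof (pos_INR n). pose proof (Cmod_ge_0 (a n)). pose proof (Cmod_ge_0 (b n)).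
  assert (rho ^ pred n <= rho' ^ pred n) by (apply pow_incr; auto).
  assert (rho ^ n <= rho' ^ n) by (apply pow_incr; auto).
  apply Rplus_le_compat; apply Rmult_le_compat_l; try lra; apply Rmult_le_pos; lra.
Qed.

Lemma t_ex (a b : nat -> C) :
  (forall z, Cmod z < 1 -> exists l, PS a z l) ->
  (forall z, Cmod z < 1 -> exists l, PS b z l) ->
  forall rho, 0 <= rho < 1 -> ex_series (tt a b rho).
Proof.
  intros Ha Hb rho Hr.
  set (r' := (1 + rho) / 2).
  assert (Hr' : 0 <= r' < 1) by (unfold r'; lra).
  assert (Sa := S2 a Ha r' Hr'). assert (Sb := S2 b Hb r' Hr').
  apply (ex_series_le (K:=R_AbsRing) (V:=R_CompleteNormedModule)) with
    (fun n => 2 * ((INR n + 1)^2 * Cmod (b n) * r' ^ n) + (INR n + 1)^2 * Cmod (a n) * r' ^ n).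
  - intro n. change (Rabs (tt a b rho n) <= 2 * ((INR n + 1)^2 * Cmod (b n) * r' ^ n) + (INR n + 1)^2 * Cmod (a n) * r' ^ n).
    rewrite Rabs_pos_eq by (apply tt_nonneg; lra). unfold tt.
    pose proof (pos_INR n). pose proof (Cmod_ge_0 (a n)). pose proof (Cmod_ge_0 (b n)).
    assert (P1 : rho ^ pred n <= r' ^ pred n) by (apply pow_incr; unfold r'; lra).
    assert (P2 : r' ^ pred n <= 2 * r' ^ n) by (apply pow_pred_le; unfold r'; lra).
    assert (P3 : rho ^ n <= r' ^ n) by (apply pow_incr; unfold r'; lra).
    assert (P4 := INR_le_sq n).
    assert (P5 : INR n + 1 <= (INR n + 1) ^ 2) by nra.
    assert (P6 : 0 <= rho ^ pred n) by (apply pow_le; lra).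
    assert (P7 : 0 <= rho ^ n) by (apply pow_le; lra).
    apply Rplus_le_compat.
    + apply Rle_trans with ((INR n + 1) ^ 2 * Cmod (b n) * (2 * r' ^ n)).
      apply Rmult_le_compat; try lra. apply Rmult_le_pos; lra. apply Rmult_le_compat_r; lra. lra.
    + apply Rmult_le_compat; try lra. apply Rmult_le_pos; lra. apply Rmult_le_compat_r; lra.
  - apply (ex_series_plus (K:=R_AbsRing) (V:=R_NormedModule)).
    apply (ex_series_scal_l (K:=R_AbsRing) (V:=R_NormedModule)). exact Sb. exact Sa.
Qed.

Lemma T_lt (a b : nat -> C) (r : R) :
  (forall rho, 0 <= rho < 1 -> ex_series (tt a b rho)) ->
  a 0%nat = RtoC 0 -> b 1%nat = RtoC 0 ->
  (exists m, a m <> RtoC 0) -> 0 < r < 1 ->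
  Series (fun n => INR (n + 2) * Cmod (b (n + 2)%nat) * r ^ (n + 1))
    + Series (fun n => INR (n + 2) * Cmod (a (n + 1)%nat) * r ^ (n + 1)) <= 1 ->
  forall rho, 0 <= rho < r -> Series (tt a b rho) < 1.
Proof.
  intros Hex Ha0 Hb1 [m Hm] Hr Hsum rho Hrho.
  set (tb := fun n => INR n * Cmod (b n) * r ^ (pred n)).
  set (ta := fun n => (INR n + 1) * Cmod (a n) * r ^ n).
  assert (Ht : ex_series (tt a b r)) by (apply Hex; lra).
  assert (Hta : ex_series ta).
  { apply (ex_series_le (K:=R_AbsRing) (V:=R_CompleteNormedModule)) with (tt a b r); auto.
    intro n. change (Rabs (ta n) <= tt a b r n). unfold ta, tt.
    pose proof (pos_INR n). pose proof (Cmod_ge_0 (a n)). pose proof (Cmod_ge_0 (b n)).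
    assert (0 <= r ^ pred n) by (apply pow_le; lra). assert (0 <= r ^ n) by (apply pow_le; lra).
    assert (0 <= INR n * Cmod (b n) * r ^ pred n) by (repeat apply Rmult_le_pos; lra).
    rewrite Rabs_pos_eq by (repeat apply Rmult_le_pos; lra). lra. }
  assert (Htb : ex_series tb).
  { apply (ex_series_le (K:=R_AbsRing) (V:=R_CompleteNormedModule)) with (tt a b r); auto.
    intro n. change (Rabs (tb n) <= tt a b r n). unfold tb, tt.
    pose proof (pos_INR n). pose proof (Cmod_ge_0 (a n)). pose proof (Cmod_ge_0 (b n)).
    assert (0 <= r ^ pred n) by (apply pow_le; lra). assert (0 <= r ^ n) by (apply pow_le; lra).
    assert (0 <= (INR n + 1) * Cmod (a n) * r ^ n) by (repeat apply Rmult_le_pos; lra).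
    rewrite Rabs_pos_eq by (repeat apply Rmult_le_pos; lra). lra. }
  assert (Tr : Series (tt a b r) <= 1).
  { rewrite (Series_ext (tt a b r) (fun n => tb n + ta n)) by reflexivity.
    rewrite Series_plus by auto.
    rewrite (Series_incr_n tb 2) by (lia || auto).
    rewrite (Series_incr_1 ta) by auto.
    assert (E1 : sum_f_R0 tb (pred 2) = 0).
    { simpl. unfold tb. rewrite Hb1. simpl. rewrite Cmod_0. ring. }
    assert (E2 : ta 0%nat = 0). { unfold ta. rewrite Ha0, Cmod_0. ring. }
    rewrite E1, E2.
    rewrite (Series_ext (fun k => tb (2 + k)%nat) (fun n => INR (n + 2) * Cmod (b (n + 2)%nat) * r ^ (n + 1))).
    rewrite (Series_ext (fun k => ta (S k)) (fun n => INR (n + 2) * Cmod (a (n + 1)%nat) * r ^ (n + 1))).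
    lra.
    - intro k. unfold ta. replace (k + 1)%nat with (S k) by lia. f_equal. f_equal.
      rewrite plus_INR, S_INR. simpl. ring.
    - intro k. unfold tb. replace (2 + k)%nat with (k + 2)%nat by lia.
      replace (pred (k + 2)) with (k + 1)%nat by lia. reflexivity. }
  assert (Hm0 : m <> 0%nat) by (intro; subst; auto).
  assert (Hrh : ex_series (tt a b rho)) by (apply Hex; lra).
  assert (Hd : 0 < tt a b r m - tt a b rho m).
  { unfold tt.
    assert (Q1 : rho ^ pred m <= r ^ pred m) by (apply pow_incr; lra).
    assert (Q2 : rho ^ m < r ^ m) by (destruct m; [lia|]; apply pow_lt_S; lra).
    assert (Q3 : 0 < Cmod (a m)) by (apply Cmod_gt_0; auto).
    pose proof (pos_INR m). pose proof (Cmod_ge_0 (b m)).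
    assert (INR m * Cmod (b m) * rho ^ pred m <= INR m * Cmod (b m) * r ^ pred m)
      by (apply Rmult_le_compat_l; [apply Rmult_le_pos|]; lra).
    assert ((INR m + 1) * Cmod (a m) * rho ^ m < (INR m + 1) * Cmod (a m) * r ^ m)
      by (apply Rmult_lt_compat_l; [apply Rmult_lt_0_compat|]; lra).
    lra. }
  assert (Hge := series_ge_term (fun n => tt a b r n - tt a b rho n) m
     ltac:(apply (ex_series_minus (K:=R_AbsRing) (V:=R_NormedModule)); auto)
     ltac:(intro n; pose proof (tt_mono a b rho r n ltac:(lra)); lra)).
  rewrite Series_minus in Hge by auto. simpl in Hge. lra.
Qed.


Lemma Cmod_1' : Cmod (RtoC 1) = 1.
Proof. rewrite Cmod_R. apply Rabs_R1. Qed.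

Lemma le_tt_ex (a b : nat -> C) rho (v : nat -> R) :
  ex_series (tt a b rho) -> (forall n, 0 <= v n <= tt a b rho n) -> ex_series v.
Proof.
  intros Hex Hv. apply (ex_series_le (K:=R_AbsRing) (V:=R_CompleteNormedModule)) with (tt a b rho); auto.
  intro n. change (Rabs (v n) <= tt a b rho n). rewrite Rabs_pos_eq; apply Hv.
Qed.

Lemma SP_lemma (a b : nat -> C) (G H0 F : C -> C) (r : R) :
  (forall z, Cmod z < 1 -> PS a z (G z)) ->
  (forall z, Cmod z < 1 -> PS b z (H0 z)) ->
  (forall w, F w = Cplus (Cmult (Cconj w) (G w)) (Cplus w (H0 w))) ->
  0 < r < 1 ->
  (forall rho, 0 <= rho < r -> ex_series (tt a b rho) /\ Series (tt a b rho) < 1) ->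
  sense_preserving_in F r.
Proof.
  intros PSa PSb HF Hr HT z Hz.
  set (rho := Cmod z).
  assert (Hrho : 0 <= rho < r) by (split; [apply Cmod_ge_0|exact Hz]).
  destruct (HT rho Hrho) as [Hex HTl].
  destruct (F_derivs a b G H0 F PSa PSb HF z ltac:(lra)) as [dG [dH [HdG [HdH [EFz EFzb]]]]].
  unfold Jac. rewrite EFz, EFzb.
  set (X := Cplus (Cmult (Cconj z) dG) dH).
  assert (HX : is_series (V:=C_NormedModule) (fun n => Cplus (Cmult (Cconj z) (dterm a z n)) (dterm b z n)) X)
    by (apply isC_plus; [apply isC_scal|]; auto).
  set (v1 := fun n => INR n * Cmod (a n) * rho ^ n + INR n * Cmod (b n) * rho ^ (pred n)).
  set (v2 := fun n => Cmod (a n) * rho ^ n).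
  assert (Hv : forall n, v1 n + v2 n = tt a b rho n) by (intro n; unfold v1, v2, tt; ring).
  assert (Hp : forall n, 0 <= v1 n /\ 0 <= v2 n).
  { intro n. unfold v1, v2. pose proof (pos_INR n). pose proof (Cmod_ge_0 (a n)). pose proof (Cmod_ge_0 (b n)).
    assert (0 <= rho ^ pred n) by (apply pow_le; lra). assert (0 <= rho ^ n) by (apply pow_le; lra).
    split; [apply Rplus_le_le_0_compat|]; repeat apply Rmult_le_pos; lra. }
  assert (Ex1 : ex_series v1) by (apply (le_tt_ex a b rho); auto; intro n; rewrite <- Hv; specialize (Hp n); lra).
  assert (Ex2 : ex_series v2) by (apply (le_tt_ex a b rho); auto; intro n; rewrite <- Hv; specialize (Hp n); lra).
  assert (B1 : Cmod X <= Series v1).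
  { apply (series_Cmod_le _ _ _ HX Ex1). intro n.
    eapply Rle_trans. apply Cmod_triangle. rewrite Cmod_mult, Cmod_conj, !Cmod_dterm. fold rho.
    unfold v1. right.
    assert (Hpm : INR n * Cmod (a n) * rho ^ n = Cmod (a n) * (INR n * (rho * rho ^ pred n))) by (rewrite pow_pred_mul; ring).
    rewrite Hpm. ring. }
  assert (B2 : Cmod (G z) <= Series v2).
  { apply (series_Cmod_le _ _ _ (PSa z ltac:(lra)) Ex2). intro n.
    rewrite Cmod_Cpow_mul. right. reflexivity. }
  assert (B3 : Series v1 + Series v2 = Series (tt a b rho)).
  { rewrite <- Series_plus by auto. apply Series_ext. auto. }
  assert (B4 : Cmod (RtoC 1) - Cmod X <= Cmod (Cplus (RtoC 1) X)) by apply Cmod_rev.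
  rewrite Cmod_1' in B4.
  replace (Cplus (Cmult (Cconj z) dG) (Cplus (RtoC 1) dH)) with (Cplus (RtoC 1) X) by (unfold X; ring).
  assert (0 <= Cmod (G z)) by apply Cmod_ge_0.
  assert (Cmod (G z) < Cmod (Cplus (RtoC 1) X)) by lra.
  nra.
Qed.


Lemma UN_lemma (a b : nat -> C) (G H0 F : C -> C) (r : R) :
  (forall z, Cmod z < 1 -> PS a z (G z)) ->
  (forall z, Cmod z < 1 -> PS b z (H0 z)) ->
  (forall w, F w = Cplus (Cmult (Cconj w) (G w)) (Cplus w (H0 w))) ->
  0 < r < 1 ->
  (forall rho, 0 <= rho < r -> ex_series (tt a b rho) /\ Series (tt a b rho) < 1) ->
  univalent_in F r.
Proof.
  intros PSa PSb HF Hr HT z w Hz Hw Heq.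
  set (rho := Rmax (Cmod z) (Cmod w)).
  assert (Hzr : Cmod z <= rho) by apply Rmax_l.
  assert (Hwr : Cmod w <= rho) by apply Rmax_r.
  assert (Hrho : 0 <= rho < r).
  { split. pose proof (Cmod_ge_0 z); lra. unfold rho. apply Rmax_lub_lt; auto. }
  destruct (HT rho Hrho) as [Hex HTl].
  set (S := Cplus (Cminus (Cmult (Cconj z) (G z)) (Cmult (Cconj w) (G w))) (Cminus (H0 z) (H0 w))).
  assert (HS : is_series (V:=C_NormedModule)
     (fun n => Cplus (Cminus (Cmult (Cconj z) (Cmult (Cpow z n) (a n))) (Cmult (Cconj w) (Cmult (Cpow w n) (a n))))
                     (Cminus (Cmult (Cpow z n) (b n)) (Cmult (Cpow w n) (b n)))) S).
  { apply isC_plus; apply isC_minus; try apply isC_scal; first [apply PSa | apply PSb]; lra. }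
  assert (E : Cminus z w = Copp S).
  { replace (Cminus z w) with (Cplus (Cminus (F z) (F w)) (Copp S)) by (rewrite !HF; unfold S; ring).
    rewrite Heq. ring. }
  set (d := Cmod (Cminus z w)).
  assert (Hd0 : 0 <= d) by apply Cmod_ge_0.
  assert (Exs : ex_series (fun n => d * tt a b rho n)).
  { apply (ex_series_scal_l (K:=R_AbsRing) (V:=R_NormedModule)). exact Hex. }
  assert (B : Cmod S <= Series (fun n => d * tt a b rho n)).
  { apply (series_Cmod_le _ _ _ HS Exs). intro n.
    set (D := Cminus (Cpow z n) (Cpow w n)).
    replace (Cplus (Cminus (Cmult (Cconj z) (Cmult (Cpow z n) (a n))) (Cmult (Cconj w) (Cmult (Cpow w n) (a n))))
                     (Cminus (Cmult (Cpow z n) (b n)) (Cmult (Cpow w n) (b n))))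
      with (Cplus (Cmult (a n) (Cplus (Cmult (Cconj z) D) (Cmult (Cminus (Cconj z) (Cconj w)) (Cpow w n)))) (Cmult (b n) D))
      by (unfold D; ring).
    assert (HD : Cmod D <= INR n * rho ^ pred n * d) by (apply diff_pow_bound; auto).
    assert (Hc : Cmod (Cminus (Cconj z) (Cconj w)) = d) by (rewrite <- Cminus_conj, Cmod_conj; reflexivity).
    assert (T1 := Cmod_triangle (Cmult (a n) (Cplus (Cmult (Cconj z) D) (Cmult (Cminus (Cconj z) (Cconj w)) (Cpow w n)))) (Cmult (b n) D)).
    assert (T2 := Cmod_triangle (Cmult (Cconj z) D) (Cmult (Cminus (Cconj z) (Cconj w)) (Cpow w n))).
    rewrite !Cmod_mult in T1. rewrite !Cmod_mult in T2. rewrite Cmod_conj, Hc, Cmod_pow in T2.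
    assert (Hwn : Cmod w ^ n <= rho ^ n) by (apply pow_incr; split; [apply Cmod_ge_0|auto]).
    assert (HDp : 0 <= Cmod D) by apply Cmod_ge_0.
    assert (Hz0 : 0 <= Cmod z) by apply Cmod_ge_0.
    assert (Ha : 0 <= Cmod (a n)) by apply Cmod_ge_0.
    assert (Hb : 0 <= Cmod (b n)) by apply Cmod_ge_0.
    assert (X1 : Cmod z * Cmod D <= rho * (INR n * rho ^ pred n * d)) by (apply Rmult_le_compat; auto).
    assert (X2 : d * Cmod w ^ n <= d * rho ^ n) by (apply Rmult_le_compat_l; auto).
    assert (X3 : rho * (INR n * rho ^ pred n * d) = INR n * rho ^ n * d) by (rewrite <- (Rmult_comm d), <- pow_pred_mul; ring).
    assert (Inner : Cmod (Cplus (Cmult (Cconj z) D) (Cmult (Cminus (Cconj z) (Cconj w)) (Cpow w n))) <= (INR n + 1) * rho ^ n * d) by lra.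
    assert (Y1 : Cmod (a n) * Cmod (Cplus (Cmult (Cconj z) D) (Cmult (Cminus (Cconj z) (Cconj w)) (Cpow w n))) <= Cmod (a n) * ((INR n + 1) * rho ^ n * d))
      by (apply Rmult_le_compat_l; auto).
    assert (Y2 : Cmod (b n) * Cmod D <= Cmod (b n) * (INR n * rho ^ pred n * d)) by (apply Rmult_le_compat_l; auto).
    unfold tt. lra. }
  rewrite Series_scal_l in B.
  assert (Hdd : d = Cmod S) by (unfold d; rewrite E; apply Cmod_opp').
  assert (d <= 0) by nra.
  apply Cminus_eq0. apply Cmod_le_0_eq. exact H.
Qed.


Lemma lin_combo (x k : R) (c p : C) :
  Cminus (Cmult (Cmult (RtoC x) c) p) (Cmult (RtoC k) (Cmult p c)) = Cmult (RtoC (x - k)) (Cmult p c).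
Proof. destruct c, p; unfold Cminus, Cmult, Cplus, Copp, RtoC; simpl; f_equal; ring. Qed.

Lemma lin_combo1 (x : R) (c p : C) :
  Cminus (Cmult (Cmult (RtoC x) c) p) (Cmult p c) = Cmult (RtoC (x - 1)) (Cmult p c).
Proof. destruct c, p; unfold Cminus, Cmult, Cplus, Copp, RtoC; simpl; f_equal; ring. Qed.

Lemma mul_le_1 (x y : R) : 0 <= x -> y <= 1 -> x * y <= x.
Proof. intros. nra. Qed.

Lemma STAR_lemma (a b : nat -> C) (G H0 F : C -> C) (r : R) :
  a 0%nat = RtoC 0 -> b 0%nat = RtoC 0 ->
  (forall z, Cmod z < 1 -> PS a z (G z)) ->
  (forall z, Cmod z < 1 -> PS b z (H0 z)) ->
  (forall w, F w = Cplus (Cmult (Cconj w) (G w)) (Cplus w (H0 w))) ->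
  0 < r < 1 ->
  (forall rho, 0 <= rho < r -> ex_series (tt a b rho) /\ Series (tt a b rho) < 1) ->
  forall s : R, 0 < s < r -> forall z : C, Cmod z = s ->
     0 < Re (Cdiv (Cminus (Cmult z (Fz F z)) (Cmult (Cconj z) (Fzb F z))) (F z)).
Proof.
  intros Ha0 Hb0 PSa PSb HF Hr HT s Hs z Hz.
  set (rho := Cmod z).
  assert (Hrho : 0 <= rho < r) by (unfold rho; lra).
  destruct (HT rho Hrho) as [Hex HTl].
  destruct (F_derivs a b G H0 F PSa PSb HF z ltac:(lra)) as [dG [dH [HdG [HdH [EFz EFzb]]]]].
  rewrite EFz, EFzb. apply Re_div_pos.
  set (Y1 := Cplus (Cmult (Cconj z) (Cminus (Cmult z dG) (Cmult (RtoC 2) (G z)))) (Cminus (Cmult z dH) (H0 z))).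
  set (Y2 := Cplus (Cmult (Cconj z) (G z)) (H0 z)).
  assert (E1 : Cminus (Cminus (Cmult z (Cplus (Cmult (Cconj z) dG) (Cplus (RtoC 1) dH))) (Cmult (Cconj z) (G z))) (F z) = Y1)
    by (rewrite HF; unfold Y1; ring).
  assert (E2 : F z = Cplus z Y2) by (rewrite HF; unfold Y2; ring).
  rewrite E1, E2.
  assert (HY1 : is_series (V:=C_NormedModule) (fun n =>
     Cplus (Cmult (Cconj z) (Cminus (Cmult z (dterm a z n)) (Cmult (RtoC 2) (Cmult (Cpow z n) (a n)))))
           (Cminus (Cmult z (dterm b z n)) (Cmult (Cpow z n) (b n)))) Y1).
  { apply isC_plus. apply isC_scal. apply isC_minus; apply isC_scal; auto. apply PSa; lra.
    apply isC_minus. apply isC_scal; auto. apply PSb; lra. }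
  assert (HY2 : is_series (V:=C_NormedModule) (fun n =>
     Cplus (Cmult (Cconj z) (Cmult (Cpow z n) (a n))) (Cmult (Cpow z n) (b n))) Y2).
  { apply isC_plus. apply isC_scal. apply PSa; lra. apply PSb; lra. }
  set (v1 := fun n => rho * (Rabs (INR n - 2) * Cmod (a n) * rho ^ n) + Rabs (INR n - 1) * Cmod (b n) * rho ^ n).
  set (v2 := fun n => rho * (Cmod (a n) * rho ^ n) + Cmod (b n) * rho ^ n).
  assert (Hr1 : rho < 1) by lra. assert (Hr0 : 0 <= rho) by lra.
  assert (Hv : forall n, 0 <= v1 n /\ 0 <= v2 n /\ v1 n <= tt a b rho n /\ v2 n <= tt a b rho n /\ v1 n + v2 n <= rho * tt a b rho n).
  { intro n. unfold v1, v2, tt.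
    destruct n as [|k].
    - rewrite Ha0, Hb0, Cmod_0. simpl. lra.
    - assert (Hk := pos_INR k). rewrite S_INR. simpl pred.
      pose proof (Cmod_ge_0 (a (S k))). pose proof (Cmod_ge_0 (b (S k))).
      set (A := Cmod (a (S k))) in *. set (Bb := Cmod (b (S k))) in *.
      assert (Pk : 0 <= rho ^ k) by (apply pow_le; lra).
      assert (PSk : rho ^ S k = rho * rho ^ k) by reflexivity.
      rewrite PSk.
      assert (R1 : Rabs (INR k + 1 - 1) = INR k) by (rewrite Rabs_pos_eq; lra).
      assert (R2 : Rabs (INR k + 1 - 2) <= INR k + 1) by (apply Rabs_le; lra).
      assert (R3 : 0 <= Rabs (INR k + 1 - 2)) by apply Rabs_pos.
      rewrite R1.
      assert (Q0 : 0 <= rho * rho ^ k) by (apply Rmult_le_pos; lra).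
      assert (Q1 : Rabs (INR k + 1 - 2) * A * (rho * rho ^ k) <= (INR k + 1) * A * (rho * rho ^ k)).
      { apply Rmult_le_compat_r; auto. apply Rmult_le_compat_r; auto. }
      assert (Q2 : 0 <= Rabs (INR k + 1 - 2) * A * (rho * rho ^ k)) by (repeat apply Rmult_le_pos; lra).
      assert (Q3 : 0 <= INR k * Bb * (rho * rho ^ k)) by (repeat apply Rmult_le_pos; lra).
      assert (Q4 : 0 <= A * (rho * rho ^ k)) by (repeat apply Rmult_le_pos; lra).
      assert (Q5 : 0 <= Bb * (rho * rho ^ k)) by (repeat apply Rmult_le_pos; lra).
      assert (Q6 : INR k * Bb * (rho * rho ^ k) <= (INR k + 1) * Bb * rho ^ k).
      { replace (INR k * Bb * (rho * rho ^ k)) with ((INR k * Bb * rho ^ k) * rho) by ring.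
        apply Rle_trans with (INR k * Bb * rho ^ k).
        apply mul_le_1; [repeat apply Rmult_le_pos; lra| lra].
        apply Rmult_le_compat_r; auto. apply Rmult_le_compat_r; lra. }
      assert (Q7 : rho * (Rabs (INR k + 1 - 2) * A * (rho * rho ^ k)) <= (INR k + 1) * A * (rho * rho ^ k)).
      { rewrite Rmult_comm. eapply Rle_trans; [apply mul_le_1; [exact Q2|lra]|exact Q1]. }
      assert (Q8a : 0 <= INR k * (A * (rho * rho ^ k))) by (apply Rmult_le_pos; lra).
      assert (Q8 : rho * (A * (rho * rho ^ k)) <= (INR k + 1) * A * (rho * rho ^ k)).
      { rewrite Rmult_comm. eapply Rle_trans; [apply mul_le_1; [exact Q4|lra]|]. lra. }
      assert (Q9a : 0 <= INR k * (Bb * rho ^ k)) by (apply Rmult_le_pos; [lra| apply Rmult_le_pos; lra]).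
      assert (Q9b : 0 <= Bb * rho ^ k) by (apply Rmult_le_pos; lra).
      assert (Q9 : Bb * (rho * rho ^ k) <= (INR k + 1) * Bb * rho ^ k).
      { replace (Bb * (rho * rho ^ k)) with ((Bb * rho ^ k) * rho) by ring.
        eapply Rle_trans; [apply mul_le_1; [exact Q9b|lra]|]. lra. }
      assert (Q10 : 0 <= (INR k + 1) * A * (rho * rho ^ k)) by (repeat apply Rmult_le_pos; lra).
      assert (Q11 : 0 <= (INR k + 1) * Bb * rho ^ k) by (repeat apply Rmult_le_pos; lra).
      assert (Q12 : rho * (Rabs (INR k + 1 - 2) * A * (rho * rho ^ k)) + rho * (A * (rho * rho ^ k)) <= rho * ((INR k + 1 + 1) * A * (rho * rho ^ k))).
      { rewrite <- Rmult_plus_distr_l. apply Rmult_le_compat_l; auto. lra. }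
      assert (Z1 : 0 <= rho * (Rabs (INR k + 1 - 2) * A * (rho * rho ^ k))) by (apply Rmult_le_pos; lra).
      assert (Z2 : 0 <= rho * (A * (rho * rho ^ k))) by (apply Rmult_le_pos; lra).
      repeat split; lra. }
  assert (Ex1 : ex_series v1) by (apply (le_tt_ex a b rho); auto; intro n; destruct (Hv n) as [? [? [? [? ?]]]]; lra).
  assert (Ex2 : ex_series v2) by (apply (le_tt_ex a b rho); auto; intro n; destruct (Hv n) as [? [? [? [? ?]]]]; lra).
  assert (B1 : Cmod Y1 <= Series v1).
  { apply (series_Cmod_le _ _ _ HY1 Ex1). intro n.
    rewrite !z_dterm. rewrite lin_combo, lin_combo1.
    eapply Rle_trans. apply Cmod_triangle. rewrite !Cmod_mult, Cmod_conj, !Cmod_R, Cmod_pow.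
    unfold v1. fold rho. right. ring. }
  assert (B2 : Cmod Y2 <= Series v2).
  { apply (series_Cmod_le _ _ _ HY2 Ex2). intro n.
    eapply Rle_trans. apply Cmod_triangle. rewrite !Cmod_mult, Cmod_conj, Cmod_pow.
    unfold v2. fold rho. right. ring. }
  assert (B3 : Series v1 + Series v2 <= rho * Series (tt a b rho)).
  { rewrite <- Series_plus by auto. rewrite <- Series_scal_l.
    apply Series_le. intro n; destruct (Hv n) as [? [? [? [? ?]]]]; lra.
    apply (ex_series_scal_l (K:=R_AbsRing) (V:=R_NormedModule)). exact Hex. }
  assert (B4 : Cmod z - Cmod Y2 <= Cmod (Cplus z Y2)) by apply Cmod_rev.
  fold rho in B4.
  assert (rho * Series (tt a b rho) < rho) by (assert (0 < rho) by (unfold rho; lra); nra).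
  lra.
Qed.


Theorem lemma3p4 (a b : nat -> C) (G H : C -> C) (r : R) :
  (* G(z) = sum_{n>=1} a_n z^n, analytic in the unit disk, not identically 0 *)
  a 0%nat = RtoC 0 ->
  (forall z : C, Cmod z < 1 -> is_pseries (a : nat -> C_NormedModule) (z : C_AbsRing) (G z)) ->
  (exists n : nat, a n <> RtoC 0) ->
  (* H(z) = z + sum_{n>=2} b_n z^n, analytic in the unit disk *)
  b 0%nat = RtoC 0 -> b 1%nat = RtoC 1 ->
  (forall z : C, Cmod z < 1 -> is_pseries (b : nat -> C_NormedModule) (z : C_AbsRing) (H z)) ->
  0 < r < 1 ->
  Series (fun n => INR (n + 2) * Cmod (b (n + 2)%nat) * r ^ (n + 1))
    + Series (fun n => INR (n + 2) * Cmod (a (n + 1)%nat) * r ^ (n + 1)) <= 1 ->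
  let F := fun z : C => Cplus (Cmult (Cconj z) (G z)) (H z) in
  sense_preserving_in F r /\ univalent_in F r /\ fully_starlike_in F r.
Proof.
  intros Ha0 HGs Hnz Hb0 Hb1 HHs Hr Hsum F.
  set (b' := fun n => if Nat.eqb n 1 then RtoC 0 else b n).
  set (H0 := fun w => Cminus (H w) w).
  assert (PSa : forall z, Cmod z < 1 -> PS a z (G z)) by (intros; apply PS_of_pseries; auto).
  assert (PSb : forall z, Cmod z < 1 -> PS b' z (H0 z)).
  { intros z Hz. assert (H1 := PS_of_pseries _ _ _ (HHs z Hz)).
    assert (Hind : is_series (V:=C_NormedModule) (fun n => Cmult (Cpow z n) (if Nat.eqb n 1 then RtoC 1 else RtoC 0)) z).
    { eapply isC_ext; [intro; reflexivity| | apply (is_series_finite _ 1)].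
      - rewrite sum_Sn, sum_O.
        transitivity (Cplus (Cmult (Cpow z 0) (RtoC 0)) (Cmult (Cpow z 1) (RtoC 1))). reflexivity.
        simpl. ring.
      - intros n Hn. destruct n as [|[|n]]; try lia. simpl. ring. }
    unfold PS. eapply isC_ext; [| |exact (isC_minus _ _ _ _ H1 Hind)].
    - intro n. unfold b'. destruct n as [|[|n]]; simpl; [ring| rewrite Hb1; ring | ring].
    - reflexivity. }
  assert (HF : forall w, F w = Cplus (Cmult (Cconj w) (G w)) (Cplus w (H0 w))).
  { intro w. unfold F, H0. ring. }
  assert (Ha' : forall z, Cmod z < 1 -> exists l, PS a z l) by (intros z Hz; exists (G z); auto).
  assert (Hb' : forall z, Cmod z < 1 -> exists l, PS b' z l) by (intros z Hz; exists (H0 z); auto).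
  assert (Hex := t_ex a b' Ha' Hb').
  assert (Hsum' : Series (fun n => INR (n + 2) * Cmod (b' (n + 2)%nat) * r ^ (n + 1))
    + Series (fun n => INR (n + 2) * Cmod (a (n + 1)%nat) * r ^ (n + 1)) <= 1).
  { rewrite (Series_ext (fun n => INR (n + 2) * Cmod (b' (n + 2)%nat) * r ^ (n + 1))
                        (fun n => INR (n + 2) * Cmod (b (n + 2)%nat) * r ^ (n + 1))); auto.
    intro n. unfold b'. replace (n + 2)%nat with (S (S n)) by lia. reflexivity. }
  assert (HTl := T_lt a b' r Hex Ha0 eq_refl Hnz Hr Hsum').
  assert (HT : forall rho, 0 <= rho < r -> ex_series (tt a b' rho) /\ Series (tt a b' rho) < 1).
  { intros rho Hrho. split. apply Hex; lra. apply HTl; auto. }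
  assert (Hb'0 : b' 0%nat = RtoC 0) by exact Hb0.
  assert (SP := SP_lemma a b' G H0 F r PSa PSb HF Hr HT).
  assert (UN := UN_lemma a b' G H0 F r PSa PSb HF Hr HT).
  assert (ST := STAR_lemma a b' G H0 F r Ha0 Hb'0 PSa PSb HF Hr HT).
  assert (F0 : F (RtoC 0) = RtoC 0).
  { assert (Hz0 : Cmod (RtoC 0) < 1) by (rewrite Cmod_0; lra).
    assert (G0 : G (RtoC 0) = RtoC 0).
    { apply (isC_unique (fun n => Cmult (Cpow (RtoC 0) n) (a n))). apply PSa; auto.
      eapply isC_ext; [intro; reflexivity| | apply (is_series_finite _ 0)].
      rewrite sum_O. simpl. rewrite Ha0. ring.
      intros n Hn. destruct n; [lia|]. simpl. ring. }
    assert (Hh0 : H0 (RtoC 0) = RtoC 0).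
    { apply (isC_unique (fun n => Cmult (Cpow (RtoC 0) n) (b' n))). apply PSb; auto.
      eapply isC_ext; [intro; reflexivity| | apply (is_series_finite _ 0)].
      rewrite sum_O. simpl. rewrite Hb'0. ring.
      intros n Hn. destruct n; [lia|]. simpl. ring. }
    rewrite HF, G0, Hh0. ring. }
  split; [exact SP|]. split; [exact UN|].
  split; [exact SP|]. split; [exact F0|]. split; [|exact ST].
  intros z [Hz1 Hz2] Hzero.
  assert (Hz0 : Cmod (RtoC 0) < r) by (rewrite Cmod_0; lra).
  assert (E : z = RtoC 0) by (apply UN; auto; rewrite Hzero, F0; reflexivity).
  rewrite E, Cmod_0 in Hz1. lra.
Qed.
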